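(* For any natural number $i$, there is a symmetric positive definite $m\times m$ matrix $G_i$ such that (i) $G_i^{-1}g_i=\theta\tau_i\widehat{S}^{-1}g_i$, where $g_i=B^{T}x_{i+1}-Dy_i-g$ and $\tau_i=\frac{\langle g_i,\widehat S^{-1}g_i\rangle}{\langle (B^TA_s^{-1}B+D)\widehat S^{-1}g_i,\widehat S^{-1}g_i\rangle}$ if $g_i\neq 0$, $\tau_i=1$ if $g_i=0$; (ii) all eigenvalues of the matrix $G_i^{-1}H$ lie in the interval $[\theta(1-\beta_1),\theta(1+\beta_1)]$.
   Context: Consider the generalized saddle point system $\begin{bmatrix} A & B\\ B^{T} & -D\end{bmatrix}\begin{bmatrix} x\\ y\end{bmatrix}=\begin{bmatrix} f\\ g\end{bmatrix}$, where $A$ is an $n\times n$ (possibly nonsymmetric) invertible matrix whose symmetric part $A_s=\frac12(A+A^T)$ is positive definite, $B$ is an $n\times m$ matrix with $m\le n$, and $D$ is symmetric positive semidefinite; the Schur complement $B^TA^{-1}B+D$ is assumed nonsingular. Let $H=B^TA_s^{-1}B+D$ (assumed symmetric positive definite), let $\widehat S$ be a symmetric positive definite preconditioner for $H$, let $\kappa_1=\mathrm{cond}(\widehat S^{-1}H)$ and $\beta_1=\frac{\kappa_1-1}{\kappa_1+1}$, and let $\theta>0$. The iterates $(x_i,y_i)$ are those of the preconditioned exact Uzawa method: given $x_0,y_0$, for $i=0,1,2,\dots$, $x_{i+1}=x_i+A^{-1}(f-(Ax_i+By_i))$, $y_{i+1}=y_i+\theta\tau_i\widehat S^{-1}(B^Tx_{i+1}-Dy_i-g)$,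 with $\tau_i$ as defined in the claim (this choice minimizes $\|\tau_i\widehat S^{-1}g_i-H^{-1}g_i\|_H^2$). *)

(* Defs.v *)
From HB Require Import structures.
From mathcomp Require Import all_boot all_order all_algebra.
Set Implicit Arguments. Unset Strict Implicit. Unset Printing Implicit Defensive.
Import Order.TTheory GRing.Theory Num.Theory.
Local Open Scope ring_scope.

Section Defs.
Variable R : realFieldType.

Definition inner (k : nat) (u v : 'cV[R]_k) : R := (u^T *m v) 0 0.

Definition symmetric_mx (k : nat) (M : 'M[R]_k) : Prop := M^T = M.

Definition posdef_mx (k : nat) (M : 'M[R]_k) : Prop :=
  forall v : 'cV[R]_k, v != 0 -> 0 < inner v (M *m v).

Definition possemidef_mx (k : nat) (M : 'M[R]_k) : Prop :=
  forall v : 'cV[R]_k, 0 <= inner v (M *m v).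

Definition sym_part (k : nat) (A : 'M[R]_k) : 'M[R]_k := 2^-1 *: (A + A^T).

Definition uzawa_tau (m : nat) (H Sh : 'M[R]_m) (gi : 'cV[R]_m) : R :=
  if gi == 0 then 1
  else inner gi (invmx Sh *m gi) / inner (H *m (invmx Sh *m gi)) (invmx Sh *m gi).

Variables (n m : nat) (A : 'M[R]_n) (B : 'M[R]_(n, m)) (D Sh : 'M[R]_m)
  (f : 'cV[R]_n) (g : 'cV[R]_m) (theta : R).

Definition uzawa_H : 'M[R]_m := B^T *m invmx (sym_part A) *m B + D.

Definition uzawa_xnext (x : 'cV[R]_n) (y : 'cV[R]_m) : 'cV[R]_n :=
  x + invmx A *m (f - (A *m x + B *m y)).

Definition uzawa_res (x : 'cV[R]_n) (y : 'cV[R]_m) : 'cV[R]_m :=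
  B^T *m uzawa_xnext x y - D *m y - g.

Definition uzawa_step (p : 'cV[R]_n * 'cV[R]_m) : 'cV[R]_n * 'cV[R]_m :=
  let: (x, y) := p in
  let gi := uzawa_res x y in
  (uzawa_xnext x y, y + (theta * uzawa_tau uzawa_H Sh gi) *: (invmx Sh *m gi)).

Definition uzawa_iter (x0 : 'cV[R]_n) (y0 : 'cV[R]_m) (i : nat) :=
  iter i uzawa_step (x0, y0).

End Defs.

(* Main.v *)
Require Import Defs.
From HB Require Import structures.
From mathcomp Require Import all_boot all_order all_algebra.
From mathcomp Require Import ring lra.
From mathcomp.real_closed Require Import complex.
Import Order.TTheory GRing.Theory Num.Theory.
Local Open Scope ring_scope.
Set Implicit Arguments. Unset Strict Implicit. Unset Printing Implicit Defensive.

Section Rl.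
Variable R : realFieldType.

Lemma innerC n (u v : 'cV[R]_n) : inner u v = inner v u.
Proof. rewrite /inner; transitivity ((u^T *m v)^T 0 0); first by rewrite [RHS]mxE.
by rewrite trmx_mul trmxK. Qed.

Lemma inner_ge0 n (u : 'cV[R]_n) : 0 <= inner u u.
Proof. by rewrite /inner mxE; apply: sumr_ge0 => i _; rewrite mxE -expr2 sqr_ge0. Qed.

Lemma innerM n m (u : 'cV[R]_n) (A : 'M[R]_(n, m)) v :
  inner u (A *m v) = inner (A^T *m u) v.
Proof. by rewrite /inner trmx_mul trmxK mulmxA. Qed.

Lemma innerDl n (u v w : 'cV[R]_n) : inner (u + v) w = inner u w + inner v w.
Proof. by rewrite /inner linearD /= mulmxDl mxE. Qed.

Lemma innerDr n (u v w : 'cV[R]_n) : inner w (u + v) = inner w u + inner w v.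
Proof. by rewrite /inner mulmxDr mxE. Qed.

Lemma innerZl n a (u w : 'cV[R]_n) : inner (a *: u) w = a * inner u w.
Proof. by rewrite /inner linearZ /= -scalemxAl mxE. Qed.

Lemma innerZr n a (u w : 'cV[R]_n) : inner w (a *: u) = a * inner w u.
Proof. by rewrite /inner -scalemxAr mxE. Qed.

Lemma innerNl n (u w : 'cV[R]_n) : inner (- u) w = - inner u w.
Proof. by rewrite -scaleN1r innerZl mulN1r. Qed.

Lemma innerNr n (u w : 'cV[R]_n) : inner w (- u) = - inner w u.
Proof. by rewrite -scaleN1r innerZr mulN1r. Qed.

Lemma inner0l n (w : 'cV[R]_n) : inner 0 w = 0.
Proof. by rewrite -(scale0r 0) innerZl mul0r. Qed.

Lemma inner0r n (w : 'cV[R]_n) : inner w 0 = 0.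
Proof. by rewrite -(scale0r 0) innerZr mul0r. Qed.

Lemma ker_nz n (A : 'M[R]_n) : A \notin unitmx -> exists2 v : 'rV_n, v != 0 & v *m A = 0.
Proof.
move=> nu; have : kermx A != 0 by rewrite kermx_eq0 row_free_unit.
move=> nz; have [i hi] : exists i, row i (kermx A) != 0.
  apply/existsP; apply: contraNT nz => /existsPn h.
  by apply/eqP/row_matrixP => i; rewrite row0; apply/eqP; have := h i; rewrite negbK.
by exists (row i (kermx A)) => //; rewrite -row_mul mulmx_ker row0.
Qed.

Lemma posdef_unit n (A : 'M[R]_n) : symmetric_mx A -> posdef_mx A -> A \in unitmx.
Proof.
move=> sA pA; apply: contraT => /ker_nz [v v0 hv].
have : v^T != 0 by rewrite trmx_eq0.
move/pA; rewrite -sA -trmx_mul hv trmx0 /inner mulmx0 mxE ltxx //.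
Qed.

Lemma sym_inv n (A : 'M[R]_n) : symmetric_mx A -> symmetric_mx (invmx A).
Proof. by rewrite /symmetric_mx trmx_inv => ->. Qed.

Lemma cs n (A : 'M[R]_n) (u x : 'cV_n) : symmetric_mx A -> posdef_mx A ->
  inner u (A *m x) ^+ 2 <= inner u (A *m u) * inner x (A *m x).
Proof.
move=> sA pA.
have sym : forall a b : 'cV_n, inner a (A *m b) = inner b (A *m a).
  by move=> a b; rewrite innerM sA innerC.
have psd : forall a : 'cV_n, 0 <= inner a (A *m a).
  move=> a; case: (eqVneq a 0) => [->|a0]; first by rewrite inner0l.
  exact/ltW/pA.
case: (eqVneq u 0) => [->|u0]; first by rewrite !inner0l expr0n /= mul0r.
have uu := pA _ u0; set a := inner u (A *m u) in uu *.
set t := inner u (A *m x).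
have := psd (x - (t / a) *: u).
rewrite mulmxDr mulmxN -scalemxAr !(innerDl, innerDr, innerNl, innerNr, innerZl, innerZr).
rewrite (sym x u) -/t -/a => h.
rewrite (_ : _ - _ + _ = inner x (A *m x) - t ^+ 2 / a) in h; last first.
  by field; rewrite lt0r_neq0.
by rewrite subr_ge0 ler_pdivrMr // mulrC in h.
Qed.


Lemma psd_of n (A : 'M[R]_n) (x : 'cV_n) : posdef_mx A -> 0 <= inner x (A *m x).
Proof. by move=> pA; case: (eqVneq x 0) => [->|x0]; [rewrite inner0l | exact/ltW/pA]. Qed.

Lemma gen_eig n (G H : 'M[R]_n) a : symmetric_mx G -> posdef_mx G -> symmetric_mx H ->
  eigenvalue (invmx G *m H) a -> exists2 z : 'cV_n, z != 0 & H *m z = a *: (G *m z).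
Proof.
move=> sG pG sH /eigenvalueP [v hv v0].
have Gu := posdef_unit sG pG.
exists (invmx G *m v^T).
  apply: contra v0 => /eqP h; have := congr1 (mulmx G) h; rewrite mulKVmx // mulmx0.
  by move=> /(congr1 trmx); rewrite trmxK trmx0 => ->.
rewrite mulKVmx //.
have := congr1 trmx hv; rewrite !trmx_mul sH trmx_inv sG linearZ /=.
by rewrite mulmxA.
Qed.

Lemma eig_bound n (G H : 'M[R]_n) (a b lam : R) : symmetric_mx G -> posdef_mx G ->
  symmetric_mx H -> posdef_mx H ->
  (forall x, x != 0 -> a * inner x (G *m x) <= inner x (H *m x) <= b * inner x (G *m x)) ->
  eigenvalue (invmx G *m H) lam -> a <= lam <= b.
Proof.
move=> sG pG sH pH hb /(gen_eig sG pG sH) [z z0 hz].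
have g0 := pG _ z0; have /andP[h1 h2] := hb _ z0.
rewrite hz innerZr in h1 h2.
by rewrite -(ler_pM2r g0) h1 -(ler_pM2r g0) h2.
Qed.

Lemma eig_pos n (G H : 'M[R]_n) lam : symmetric_mx G -> posdef_mx G ->
  symmetric_mx H -> posdef_mx H -> eigenvalue (invmx G *m H) lam -> 0 < lam.
Proof.
move=> sG pG sH pH /(gen_eig sG pG sH) [z z0 hz].
have g0 := pG _ z0; have := pH _ z0.
by rewrite hz innerZr pmulr_lgt0.
Qed.

End Rl.

Section Cx.
Local Open Scope sesquilinear_scope.
Variable C : numClosedFieldType.

Lemma tcM m n p (A : 'M[C]_(m, n)) (B : 'M[C]_(n, p)) : (A *m B)^t* = B^t* *m A^t*.
Proof. by rewrite trmx_mul map_mxM. Qed.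

Lemma tc_diag n (d : 'rV[C]_n) : (forall j, d 0 j \is Num.real) -> (diag_mx d)^t* = diag_mx d.
Proof.
move=> dr; apply/matrixP=> i j; rewrite !mxE.
case: (eqVneq i j) => [->|nij]; first by rewrite ?eqxx !mulr1n conj_Creal.
by rewrite ?mulr0n conjC0.
Qed.

Lemma diag_delta n (d : 'rV[C]_n) j : diag_mx d *m delta_mx j (0 : 'I_1) = d 0 j *: delta_mx j 0.
Proof.
apply/matrixP=> i k; rewrite mul_diag_mx !mxE.
by case: (eqVneq i j) => [->|nij]; rewrite ?mulr1 ?mulr0.
Qed.

Lemma unitary_l n (U : 'M[C]_n) : U \is unitarymx -> U^t* *m U = 1%:M.
Proof. by move=> hU; rewrite -invmx_unitary // mulVmx // unitarymx_unit. Qed.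

Lemma unitary_r n (U : 'M[C]_n) : U \is unitarymx -> U *m U^t* = 1%:M.
Proof. by move/unitarymxP. Qed.

Lemma herm_spec n (S : 'M[C]_n) : S^t* = S ->
  let U := spectralmx S in let d := spectral_diag S in
  [/\ U \is unitarymx, S = U^t* *m diag_mx d *m U & forall j, d 0 j \is Num.real].
Proof.
move=> hS U d.
have hh : S \is hermsymmx by apply/is_hermitianmxP; rewrite expr0 scale1r hS.
split; first exact: spectral_unitarymx.
  rewrite -invmx_unitary; last exact: spectral_unitarymx.
  by apply/orthomx_spectralP; exact: hermitian_normalmx.
by move=> j; have /mxOverP := hermitian_spectral_diag_real hh; apply.
Qed.

Lemma simdiag n (S H : 'M[C]_n) : S^t* = S -> H^t* = H ->
  (forall (x : 'cV_n) (d : C), x != 0 -> d \is Num.real -> S *m x = d *: x -> 0 < d) ->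
  exists V : 'M_n, exists lam : 'rV_n,
    [/\ V^t* *m S *m V = 1%:M, V^t* *m H *m V = diag_mx lam & forall j, lam 0 j \is Num.real].
Proof.
move=> hS hH pos.
have [Uu SE dr] := herm_spec hS.
set U := spectralmx S in Uu SE; set d := spectral_diag S in SE dr.
have UU1 := unitary_l Uu; have UU2 := unitary_r Uu.
have dpos : forall j, 0 < d 0 j.
  move=> j.
  have xnz : U^t* *m delta_mx j (0 : 'I_1) != 0.
    apply/eqP => /(congr1 (mulmx U)); rewrite mulmxA UU2 mul1mx mulmx0.
    move=> /matrixP/(_ j 0); rewrite !mxE !eqxx /= => /eqP; by rewrite oner_eq0.
  apply: (pos _ _ xnz (dr j)).
  by rewrite [in LHS]SE -!mulmxA (mulmxA U) UU2 mul1mx diag_delta scalemxAr.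
pose r := \row_j (sqrtC (d 0 j))^-1.
have rr : forall j, r 0 j \is Num.real.
  move=> j; rewrite mxE; apply: ger0_real; rewrite invr_ge0 sqrtC_ge0; exact: ltW.
pose R0 := U^t* *m diag_mx r.
have R0t : R0^t* = diag_mx r *m U by rewrite /R0 tcM tc_diag // trmxCK.
have R0S : R0^t* *m S *m R0 = 1%:M.
  rewrite R0t SE /R0 !mulmxA -(mulmxA _ U) UU2 mulmx1 -!mulmxA (mulmxA U) UU2 mul1mx.
  rewrite !mulmx_diag; apply/matrixP=> i j; rewrite !mxE.
  case: (eqVneq i j) => [->|nij]; last by rewrite !mulr0n.
  rewrite !mulr1n.
  have s0 : sqrtC (d 0 j) != 0 by rewrite sqrtC_eq0; exact: lt0r_neq0.
  set s := sqrtC (d 0 j) in s0 *.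
  have -> : d 0 j = s ^+ 2 by rewrite /s sqrtCK.
  by rewrite expr2 mulfK // mulVf.
pose T := R0^t* *m H *m R0.
clearbody R0.
have hT : T^t* = T by rewrite /T !tcM trmxCK hH mulmxA.
have [Wu TE lr] := herm_spec hT.
set W := spectralmx T in Wu TE; set lam := spectral_diag T in TE lr.
have WW1 := unitary_l Wu; have WW2 := unitary_r Wu.
exists (R0 *m W^t*), lam; split => //.
  by rewrite tcM trmxCK !mulmxA -(mulmxA W) -(mulmxA W) R0S mulmx1 WW2.
rewrite tcM trmxCK.
have -> : W *m R0^t* *m H *m (R0 *m W^t*) = W *m T *m W^t* by rewrite /T !mulmxA.
by rewrite TE !mulmxA WW2 mul1mx -mulmxA WW2 mulmx1.
Qed.


Lemma lin_C n (S H V : 'M[C]_n) (lam : 'rV[C]_n) (l L : C) :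
  V^t* *m S *m V = 1%:M -> V^t* *m H *m V = diag_mx lam -> 0 < l ->
  (forall j, l <= lam 0 j <= L) ->
  forall x : 'cV_n,
   (x^t* *m ((H - (l + L) *: S + (l * L) *: (S *m invmx H *m S)) *m x)) 0 0 <= 0.
Proof.
move=> hS hH l0 hl x.
have lpos : forall j, 0 < lam 0 j.
  by move=> j; case/andP: (hl j) => h1 _; exact: lt_le_trans h1.
pose Dinv := diag_mx (\row_j (lam 0 j)^-1).
have LD : diag_mx lam *m Dinv = 1%:M.
  rewrite mulmx_diag; apply/matrixP=> i j; rewrite !mxE.
  case: (eqVneq i j) => [->|nij]; last by rewrite !mulr0n.
  by rewrite !mulr1n mulfV // lt0r_neq0.
have [_ Vu] := mulmx1_unit hS.
have h1 : V *m V^t* *m S = 1%:M.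
  apply: (can_inj (mulmxK Vu)); by rewrite mul1mx -!mulmxA (mulmxA (V^t*)) hS mulmx1.
have [_ Su] := mulmx1_unit h1.
have h2 : S *m (V *m V^t*) = 1%:M.
  have -> : V *m V^t* = invmx S by rewrite -[LHS]mulmx1 -(mulmxV Su) mulmxA h1 mul1mx.
  exact: mulmxV.
have Hu : H \in unitmx.
  have : V^t* *m H *m V *m Dinv = 1%:M by rewrite hH LD.
  by case/mulmx1_unit; rewrite !unitmx_mul => /andP[/andP[_ ->]].
have K : V^t* *m (S *m invmx H *m S) *m V = Dinv.
  rewrite -[LHS]mulmx1 -LD -hH mulmxA.
  have -> : V^t* *m (S *m invmx H *m S) *m V *m (V^t* *m H *m V) =
            V^t* *m S *m invmx H *m (S *m (V *m V^t*)) *m H *m V by rewrite !mulmxA.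
  by rewrite h2 mulmx1 mulmxKV // hS mul1mx.
pose mu := \row_j (lam 0 j - (l + L) + (l * L) * (lam 0 j)^-1).
have VN : V^t* *m (H - (l + L) *: S + (l * L) *: (S *m invmx H *m S)) *m V = diag_mx mu.
  rewrite !mulmxDr !mulmxDl -!scalemxAr -!scalemxAl K hH mulmxN mulNmx -scalemxAr -scalemxAl hS.
  apply/matrixP=> i j; rewrite !mxE.
  case: (eqVneq i j) => [->|nij]; last by rewrite !mulr0n !mulr0 subr0 addr0.
  by rewrite !mulr1n mulr1.
have mule : forall j, mu 0 j <= 0.
  move=> j; rewrite mxE -(pmulr_lle0 _ (lpos j)).
  have -> : (lam 0 j - (l + L) + l * L * (lam 0 j)^-1) * lam 0 j =
            (lam 0 j - l) * (lam 0 j - L).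
    have an : lam 0 j != 0 by rewrite lt0r_neq0.
    by field.
  case/andP: (hl j) => h3 h4.
  by apply: mulr_ge0_le0; rewrite ?subr_ge0 ?subr_le0.
set N := H - _ + _ in VN *.
have -> : x = V *m (invmx V *m x) by rewrite mulKVmx.
set y := invmx V *m x; clearbody y.
rewrite tcM -!mulmxA (mulmxA (V^t*)) (mulmxA (V^t* *m N)) VN.
rewrite mxE.
apply: sumr_le0 => k _.
rewrite mul_diag_mx !mxE mulrCA.
apply: mulr_le0_ge0; first by have := mule k; rewrite mxE.
by rewrite mulrC mul_conjC_ge0.
Qed.


Lemma gen_eig_C n (S H V : 'M[C]_n) (lam : 'rV[C]_n) :
  V^t* *m S *m V = 1%:M -> V^t* *m H *m V = diag_mx lam ->
  forall j, V *m delta_mx j (0 : 'I_1) != 0 /\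
    H *m (V *m delta_mx j (0 : 'I_1)) = lam 0 j *: (S *m (V *m delta_mx j (0 : 'I_1))).
Proof.
move=> hS hH j.
have [VSu Vu] := mulmx1_unit hS.
have Vtu : V^t* \in unitmx by move: VSu; rewrite unitmx_mul => /andP[].
have HV : H *m V = S *m V *m diag_mx lam.
  apply: (can_inj (@mulKmx _ n n _ Vtu)); by rewrite !mulmxA hH hS mul1mx.
split.
  apply: contraTneq isT => h0; have := congr1 (mulmx (invmx V)) h0.
  rewrite mulKmx // mulmx0 => /matrixP /(_ j 0); rewrite !mxE !eqxx /=.
  by move/eqP; rewrite oner_eq0.
by rewrite mulmxA HV -mulmxA diag_delta -scalemxAr mulmxA.
Qed.

End Cx.

Section Br.
Local Open Scope sesquilinear_scope.
Variable R : rcfType.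
Local Notation C := (R[i]).
Local Notation f := (real_complex R).

Lemma fconj (x : R) : (f x)^* = f x.
Proof. by apply: conj_Creal; rewrite complex_real. Qed.

Lemma tcf m n (A : 'M[R]_(m, n)) : (map_mx f A)^t* = map_mx f A^T.
Proof. by apply/matrixP=> i j; rewrite !mxE fconj. Qed.

Lemma eig_transfer n (M : 'M[R]_n) (z : 'rV[C]_n) (a : R) :
  z != 0 -> z *m (map_mx f M) = f a *: z -> eigenvalue M a.
Proof.
move=> z0 hz; rewrite eigenvalue_root_char -(fmorph_root f) map_char_poly.
by rewrite -eigenvalue_root_char; apply/eigenvalueP; exists z.
Qed.


Lemma fle (x y : R) : (f x <= f y) = (x <= y).
Proof. exact: lecR. Qed.

Lemma lin_real n (S H : 'M[R]_n) (l L : R) :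
  symmetric_mx S -> posdef_mx S -> symmetric_mx H -> posdef_mx H -> 0 < l ->
  (forall a, eigenvalue (invmx S *m H) a -> l <= a <= L) ->
  forall w : 'cV_n,
    inner w ((H - (l + L) *: S + (l * L) *: (S *m invmx H *m S)) *m w) <= 0.
Proof.
move=> sS pS sH pH l0 hb w.
have Su := posdef_unit sS pS.
set S' := map_mx f S; set H' := map_mx f H.
have hS' : S'^t* = S' by rewrite /S' tcf sS.
have hH' : H'^t* = H' by rewrite /H' tcf sH.
have tS' : S'^T = S' by rewrite /S' map_trmx sS.
have tH' : H'^T = H' by rewrite /H' map_trmx sH.
have pos : forall (x : 'cV_n) (d : C), x != 0 -> d \is Num.real -> S' *m x = d *: x -> 0 < d.
  move=> x d x0 /complex_realP [k ->] hx.
  have : eigenvalue S k.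
    apply: (eig_transfer (z := x^T)); first by rewrite trmx_eq0.
    by rewrite -/S' -tS' -trmx_mul hx linearZ.
  move=> /eigenvalueP [v hv v0].
  have u0 : v^T != 0 by rewrite trmx_eq0.
  have := pS _ u0; rewrite -sS -trmx_mul hv linearZ /= innerZr.
  have := inner_ge0 v^T => hge.
  rewrite -(rmorph0 f) ltcR => hp.
  rewrite ltNge; apply/negP => kle; move: hp.
  by rewrite ltNge (mulr_le0_ge0 kle hge).
have [V [lam [hV1 hV2 lr]]] := simdiag hS' hH' pos.
have lb : forall j, f l <= lam 0 j <= f L.
  move=> j; have [x0 hx] := gen_eig_C hV1 hV2 j.
  set x := V *m delta_mx j 0 in x0 hx.
  have /complex_realP [k lk] := lr j.
  have S'u : S' \in unitmx by rewrite /S' map_unitmx.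
  have : eigenvalue (invmx S *m H) k.
    apply: (eig_transfer (z := x^T *m S')).
      rewrite mulmx_free_eq0 ?row_free_unit // trmx_eq0 //.
    rewrite map_mxM map_invmx -/S' -/H' mulmxA mulmxK //.
    by rewrite -tH' -trmx_mul hx linearZ /= trmx_mul tS' lk.
  by move/hb; rewrite lk !fle.
have l0' : 0 < f l by rewrite -(rmorph0 f) ltcR.
have := lin_C hV1 hV2 l0' lb (map_mx f w).
have NE : H' - (f l + f L) *: S' + (f l * f L) *: (S' *m invmx H' *m S') =
  map_mx f (H - (l + L) *: S + (l * L) *: (S *m invmx H *m S)).
  by rewrite map_mxD map_mxB !map_mxZ !map_mxM map_invmx rmorphD rmorphM.
rewrite tcf NE -!map_mxM mxE -(rmorph0 f) fle.
by rewrite /inner mulmxA.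
Qed.

End Br.

Section Cn.
Variable R : rcfType.

Lemma quad_rank1 n (H : 'M[R]_n) (u x : 'cV_n) : symmetric_mx H ->
  inner x (((H *m u) *m (H *m u)^T) *m x) = inner u (H *m x) ^+ 2.
Proof.
move=> sH.
rewrite -mulmxA [(H *m u)^T *m x]mx11_scalar mul_mx_scalar innerZr.
have -> : ((H *m u)^T *m x) 0 0 = inner u (H *m x) by rewrite innerM sH.
by rewrite innerC innerM sH expr2.
Qed.

Lemma rank1_apply n (H : 'M[R]_n) (u x : 'cV_n) : symmetric_mx H ->
  ((H *m u) *m (H *m u)^T) *m x = inner u (H *m x) *: (H *m u).
Proof.
move=> sH; rewrite -mulmxA [(H *m u)^T *m x]mx11_scalar mul_mx_scalar.
by rewrite innerM sH.
Qed.

Lemma symG n (H : 'M[R]_n) (v : 'cV_n) (a b s : R) : symmetric_mx H ->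
  symmetric_mx (a *: H + b *: (H - s *: (v *m v^T))).
Proof.
move=> sH; rewrite /symmetric_mx linearD /= !linearZ /= linearD /= linearN /= linearZ /=.
by rewrite linearZ /= linearN /= trmx_mul trmxK sH.
Qed.

Lemma construct_G m (H S : 'M[R]_m) (gi : 'cV_m) (theta beta : R) :
  symmetric_mx H -> posdef_mx H -> symmetric_mx S -> posdef_mx S ->
  0 < theta -> 0 <= beta -> beta < 1 ->
  (1 - beta ^+ 2) * inner gi (invmx H *m gi) *
     inner (H *m (invmx S *m gi)) (invmx S *m gi) <= inner gi (invmx S *m gi) ^+ 2 ->
  exists G : 'M[R]_m,
    [/\ symmetric_mx G, posdef_mx G,
        invmx G *m gi = (theta * uzawa_tau H S gi) *: (invmx S *m gi) &
        forall a, eigenvalue (invmx G *m H) a ->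
          theta * (1 - beta) <= a <= theta * (1 + beta)].
Proof.
move=> sH pH sS pS th0 b0 b1 Kant.
have Hu := posdef_unit sH pH; have Su := posdef_unit sS pS.
set Hi := invmx H.
have sHi : symmetric_mx Hi := sym_inv sH.
have symH : forall a b : 'cV_m, inner a (H *m b) = inner b (H *m a).
  by move=> a b; rewrite innerM sH innerC.
have psdH : forall a : 'cV_m, 0 <= inner a (H *m a) by move=> a; exact: psd_of.
have HiE : forall d : 'cV_m, inner d (Hi *m d) = inner (Hi *m d) (H *m (Hi *m d)).
  by move=> d; rewrite mulKVmx // innerC.
set w := invmx S *m gi.
have giE : gi = S *m w by rewrite /w mulKVmx.
set tau := uzawa_tau H S gi.
set p := (theta * tau) *: w.
set D := theta * (1 - beta ^+ 2).
have D0 : 0 < D by rewrite pmulr_rgt0 // subr_gt0 expr_lt1.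
set c := D^-1.
have c0 : 0 < c by rewrite invr_gt0.
set d := gi - c *: (H *m p).
set np := Num.sqrt (inner p (H *m p)).
set nd := Num.sqrt (inner d (Hi *m d)).
set k := nd / np.
set e := np^-1 *: p.
set fv := nd^-1 *: (Hi *m d).
set u := e - fv.
set E := H - ((inner u (H *m u))^-1 * 2) *: ((H *m u) *m (H *m u)^T).
set G := c *: H + k *: E.
have EQ : forall x, - inner x (H *m x) <= inner x (E *m x) <= inner x (H *m x).
  move=> x; rewrite /E mulmxBl -scalemxAl innerDr innerNr innerZr quad_rank1 //.
  have := cs u x sH pH; set t := inner u (H *m x) => cs1.
  have hx := psdH x; have hu := psdH u.
  case: (eqVneq (inner u (H *m u)) 0) => [->|u0].
    by rewrite invr0 !mul0r subr0; apply/andP; split; lra.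
  have hu0 : 0 < inner u (H *m u) by rewrite lt_def u0 hu.
  set hu' := inner u (H *m u) in hu0 cs1 u0 hu *.
  have z0 : 0 <= hu'^-1 * t ^+ 2 by rewrite mulr_ge0 ?invr_ge0 ?sqr_ge0 // ltW.
  have z1 : hu'^-1 * t ^+ 2 <= inner x (H *m x) by rewrite mulrC ler_pdivrMr // mulrC.
  have -> : hu'^-1 * 2 * t ^+ 2 = 2 * (hu'^-1 * t ^+ 2) by ring.
  apply/andP; split; lra.
set q := inner gi w. set h := inner (H *m w) w. set Y := inner gi (Hi *m gi).
have Hid : Hi *m d = Hi *m gi - c *: p by rewrite /d mulmxBr -scalemxAr mulKmx.
have e1 : inner (H *m w) (Hi *m gi) = q.
  by rewrite innerM sHi /Hi mulKmx // innerC.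
have X : inner d (Hi *m d) = Y - 2 * c * (theta * tau) * q + c ^+ 2 * (theta * tau) ^+ 2 * h.
  rewrite Hid /d /p -!scalemxAr.
  rewrite !(innerDl, innerDr, innerNl, innerNr, innerZl, innerZr) e1 -/q -/h -/Y.
  ring.
have pHp : inner p (H *m p) = (theta * tau) ^+ 2 * h.
  by rewrite /p -scalemxAr innerZl innerZr /h innerC; ring.
have Xle : inner d (Hi *m d) <= (beta * c) ^+ 2 * inner p (H *m p).
  rewrite X pHp.
  case: (eqVneq gi 0) => [g0|g0].
    have w0 : w = 0 by rewrite /w g0 mulmx0.
    by rewrite /q /h /Y g0 w0 !(inner0l, inner0r) !(mulr0, subr0, addr0).
  have w0 : w != 0.
    by apply: contra g0 => /eqP w0; rewrite giE w0 mulmx0.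
  have h0 : 0 < h by rewrite /h innerC; exact: pH.
  have taue : tau = q / h by rewrite /tau /uzawa_tau (negbTE g0).
  have b2 : 0 < 1 - beta ^+ 2 by rewrite subr_gt0 expr_lt1.
  have key : Y - 2 * c * (theta * tau) * q + c ^+ 2 * (theta * tau) ^+ 2 * h -
              (beta * c) ^+ 2 * ((theta * tau) ^+ 2 * h) =
             ((1 - beta ^+ 2) * Y * h - q ^+ 2) / ((1 - beta ^+ 2) * h).
    rewrite /c /D taue.
    have t0 : theta != 0 by rewrite lt0r_neq0.
    have b0' : 1 - beta ^+ 2 != 0 by rewrite lt0r_neq0.
    have h0' : h != 0 by rewrite lt0r_neq0.
    by field; rewrite h0' b0' t0.
  rewrite -subr_le0 key; apply: mulr_le0_ge0.
    by rewrite subr_le0.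
  by rewrite invr_ge0 mulr_ge0 // ltW.
have pHp0 : 0 <= inner p (H *m p) by exact: psdH.
have X0 : 0 <= inner d (Hi *m d) by rewrite HiE psdH.
have ndle : nd <= beta * c * np.
  have ee : Num.sqrt ((beta * c) ^+ 2 * inner p (H *m p)) = beta * c * np.
    by rewrite sqrtrM ?sqr_ge0 // sqrtr_sqr ger0_norm // mulr_ge0 // ltW.
  rewrite -ee.
  by rewrite /nd ler_sqrt // mulr_ge0 // sqr_ge0.
have k0 : 0 <= k by rewrite /k divr_ge0 // sqrtr_ge0.
have kle : k <= beta * c.
  rewrite /k; case: (eqVneq np 0) => [->|np0]; first by rewrite invr0 mulr0 mulr_ge0 // ltW.
  by rewrite ler_pdivrMr // lt_def np0 sqrtr_ge0.
have sG : symmetric_mx G.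
  exact: symG.
have GQ : forall x, inner x (G *m x) = c * inner x (H *m x) + k * inner x (E *m x).
  by move=> x; rewrite /G mulmxDl -!scalemxAl innerDr !innerZr.
have GB : forall x, x != 0 ->
    theta * (1 - beta) * inner x (G *m x) <= inner x (H *m x) <=
    theta * (1 + beta) * inner x (G *m x).
  move=> x x0; have hx := pH _ x0; have /andP[E1 E2] := EQ x; rewrite GQ.
  have cD : theta * (1 - beta ^+ 2) * c = 1 by rewrite /c -/D mulfV // lt0r_neq0.
  set hh := inner x (H *m x) in hx E1 E2 *; set ee := inner x (E *m x) in E1 E2 *.
  have B1 : k * ee <= beta * c * hh.
    apply: (le_trans (ler_wpM2l k0 E2)); apply: ler_wpM2r kle; exact: ltW.
  have B2 : - (beta * c * hh) <= k * ee.
    rewrite lerNl -mulrN; apply: (le_trans (ler_wpM2l k0 _)); first by rewrite lerNl; exact: E1.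
    apply: ler_wpM2r kle; exact: ltW.
  have t1 : 0 <= theta * (1 - beta) by apply: mulr_ge0; rewrite ?subr_ge0 ltW.
  have t2 : 0 <= theta * (1 + beta) by apply: mulr_ge0; [exact: ltW | apply: addr_ge0].
  apply/andP; split.
    apply: (le_trans (ler_wpM2l t1 (lerD (lexx (c * hh)) B1)) _).
    have -> : theta * (1 - beta) * (c * hh + beta * c * hh) = theta * (1 - beta ^+ 2) * c * hh by ring.
    by rewrite cD mul1r.
  apply: (le_trans _ (ler_wpM2l t2 (lerD (lexx (c * hh)) B2))).
  have -> : theta * (1 + beta) * (c * hh + - (beta * c * hh)) = theta * (1 - beta ^+ 2) * c * hh by ring.
  by rewrite cD mul1r.
have pG : posdef_mx G.
  move=> x x0; have /andP[_ h2] := GB x x0; have hx := pH _ x0.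
  have t2 : 0 < theta * (1 + beta) by rewrite pmulr_rgt0 // ltr_wpDr.
  by rewrite -(pmulr_rgt0 _ t2); exact: lt_le_trans h2.
have Gp : G *m p = gi.
  rewrite /G mulmxDl -!scalemxAl.
  case: (eqVneq d 0) => [d0|d0].
    have -> : k = 0 by rewrite /k /nd d0 mulmx0 inner0l sqrtr0 mul0r.
    by rewrite scale0r addr0; apply/eqP; rewrite eq_sym -subr_eq0 -/d d0.
  have g0 : gi != 0.
    apply: contra d0 => /eqP g0; rewrite /d /p /w g0 mulmx0 scaler0 mulmx0 scaler0 subr0 //.
  have w0 : w != 0 by apply: contra g0 => /eqP w0; rewrite giE w0 mulmx0.
  have q0 : 0 < q by rewrite /q giE innerC; exact: pS.
  have h0 : 0 < h by rewrite /h innerC; exact: pH.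
  have taue : tau = q / h by rewrite /tau /uzawa_tau (negbTE g0).
  have tau0 : 0 < tau by rewrite taue divr_gt0.
  have p0 : p != 0 by rewrite /p scaler_eq0 negb_or w0 andbT mulf_neq0 // lt0r_neq0.
  have np0 : 0 < np by rewrite /np sqrtr_gt0; exact: pH.
  have Hid0 : Hi *m d != 0.
    apply: contra d0 => /eqP h1; have := congr1 (mulmx H) h1.
    by rewrite mulKVmx // mulmx0 => ->.
  have nd0 : 0 < nd by rewrite /nd sqrtr_gt0 HiE; exact: pH.
  have eHe : inner e (H *m e) = 1.
    rewrite /e -scalemxAr innerZl innerZr -(sqr_sqrtr pHp0) -/np.
    by rewrite mulrA -expr2 exprVn mulVf // expf_neq0 // lt0r_neq0.
  have fHf : inner fv (H *m fv) = 1.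
    rewrite /fv -scalemxAr innerZl innerZr -HiE -(sqr_sqrtr X0) -/nd.
    by rewrite mulrA -expr2 exprVn mulVf // expf_neq0 // lt0r_neq0.
  have Ee : E *m e = H *m fv.
    rewrite /E mulmxBl -scalemxAl rank1_apply //.
    set sc := inner e (H *m fv).
    have uHe : inner u (H *m e) = 1 - sc by rewrite /u innerDl innerNl eHe symH.
    have uHu : inner u (H *m u) = 2 - 2 * sc.
      rewrite {1}/u innerDl innerNl /u mulmxBr !innerDr !innerNr eHe fHf (symH fv e) -/sc.
      ring.
    case: (eqVneq (inner u (H *m u)) 0) => [u0|u0].
      have uz : u == 0 by apply: contraT => un; have := pH _ un; rewrite u0 ltxx.
      have efv : e = fv by apply/eqP; rewrite -subr_eq0.
      by rewrite u0 invr0 mul0r scale0r subr0 efv.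
    have e2 : 2 - 2 * sc = 2 * (1 - sc) by ring.
    have s1 : 1 - sc != 0.
      by apply: contra u0 => /eqP h1; rewrite uHu e2 h1 mulr0.
    rewrite uHe uHu scalerA (_ : (2 - 2 * sc)^-1 * 2 * (1 - sc) = 1); last first.
      by rewrite e2; field.
    by rewrite scale1r -mulmxBr /u opprB addrC subrK.
  have pe : p = np *: e by rewrite /e scalerA mulfV ?scale1r // lt0r_neq0.
  rewrite [in E *m p]pe -[E *m (np *: e)]scalemxAr Ee scalerA /k mulfVK ?lt0r_neq0 // /fv.
  rewrite -[H *m (nd^-1 *: _)]scalemxAr scalerA mulfV ?lt0r_neq0 // scale1r mulKVmx // /d addrC subrK //.
exists G; split => //.
  by rewrite -Gp mulKmx // posdef_unit.
by move=> a; apply: eig_bound => //.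
Qed.

End Cn.

Unset Implicit Arguments. Set Strict Implicit.

Theorem lemma2p2 (R : rcfType) (n m : nat)
  (A : 'M[R]_n) (B : 'M[R]_(n, m)) (D Sh : 'M[R]_m)
  (f : 'cV[R]_n) (g : 'cV[R]_m) (theta : R)
  (x0 : 'cV[R]_n) (y0 : 'cV[R]_m)
  (lmin lmax : R) :
  (m <= n)%N ->
  A \in unitmx ->
  posdef_mx (sym_part A) ->
  symmetric_mx D -> possemidef_mx D ->
  B^T *m invmx A *m B + D \in unitmx ->
  symmetric_mx (uzawa_H A B D) -> posdef_mx (uzawa_H A B D) ->
  symmetric_mx Sh -> posdef_mx Sh ->
  0 < theta ->
  (* lmin, lmax: the smallest and largest eigenvalues of Sh^{-1} H *)
  eigenvalue (invmx Sh *m uzawa_H A B D) lmin ->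
  eigenvalue (invmx Sh *m uzawa_H A B D) lmax ->
  (forall a, eigenvalue (invmx Sh *m uzawa_H A B D) a -> lmin <= a <= lmax) ->
  let kappa1 := lmax / lmin in
  let beta1 := (kappa1 - 1) / (kappa1 + 1) in
  forall i : nat,
  let xi := (uzawa_iter A B D Sh f g theta x0 y0 i).1 in
  let yi := (uzawa_iter A B D Sh f g theta x0 y0 i).2 in
  let gi := uzawa_res A B D f g xi yi in
  let taui := uzawa_tau (uzawa_H A B D) Sh gi in
  exists G : 'M[R]_m,
    [/\ symmetric_mx G, posdef_mx G,
        invmx G *m gi = (theta * taui) *: (invmx Sh *m gi) &
        forall a, eigenvalue (invmx G *m uzawa_H A B D) a ->
          theta * (1 - beta1) <= a <= theta * (1 + beta1)].
Proof.
move=> _ _ _ _ _ _ sH pH sS pS th0 elmin elmax hb kappa1 beta1 i xi yi gi taui.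
set H := uzawa_H A B D in sH pH elmin elmax hb taui *.
set l := lmin in elmin hb kappa1 beta1 *; set L := lmax in elmax hb kappa1 beta1 *.
have l0 : 0 < l := eig_pos sS pS sH pH elmin.
have lL : l <= L by case/andP: (hb _ elmax).
have L0 : 0 < L := lt_le_trans l0 lL.
have k1 : 1 <= kappa1 by rewrite /kappa1 ler_pdivlMr // mul1r.
have kp : 0 < kappa1 + 1 by lra.
have b0 : 0 <= beta1 by rewrite /beta1 divr_ge0 ?subr_ge0 // ltW.
have b1 : beta1 < 1 by rewrite /beta1 ltr_pdivrMr // mul1r; lra.
apply: construct_G => //.
have Hu := posdef_unit sH pH; have Su := posdef_unit sS pS.
set w := invmx Sh *m gi.
have giE : gi = Sh *m w by rewrite /w mulKVmx.
set Y := inner gi (invmx H *m gi).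
set h := inner (H *m w) w.
set q := inner gi w.
have Y0 : 0 <= Y.
  by rewrite /Y -{1}(mulKVmx Hu gi) innerC; exact: psd_of.
have h0 : 0 <= h by rewrite /h innerC; exact: psd_of.
have lin := lin_real sS pS sH pH l0 hb w.
have P1 : h + l * L * Y <= (l + L) * q.
  have e1 : inner w (H *m w) = h by rewrite /h innerC.
  have e2 : inner w (Sh *m w) = q by rewrite /q giE innerC.
  have e3 : inner w (Sh *m invmx H *m Sh *m w) = Y by rewrite -!mulmxA innerM sS -giE.
  move: lin; rewrite mulmxDl mulmxBl -!scalemxAl !innerDr !innerNr !innerZr e1 e2 e3.
  lra.
have eb : 1 - beta1 ^+ 2 = 4 * l * L / (l + L) ^+ 2.
  rewrite /beta1 /kappa1.
  have ln : l != 0 by rewrite lt0r_neq0.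
  have lLn : l + L != 0 by rewrite lt0r_neq0 // addr_gt0.
  have kn : L / l + 1 != 0 by rewrite lt0r_neq0 // -/kappa1.
  by field; rewrite lLn ln.
have lLp : 0 < (l + L) ^+ 2 by rewrite exprn_gt0 // addr_gt0.
have P0 : 0 <= h + l * L * Y by rewrite addr_ge0 // mulr_ge0 // mulr_ge0 // ltW.
have A1 : 4 * l * L * Y * h <= (h + l * L * Y) ^+ 2.
  rewrite -subr_ge0 (_ : _ - _ = (h - l * L * Y) ^+ 2); first exact: sqr_ge0.
  ring.
have A2 : (h + l * L * Y) ^+ 2 <= ((l + L) * q) ^+ 2.
  by apply: lerXn2r; rewrite ?nnegrE // (le_trans P0 P1).
rewrite eb mulrAC -mulrA mulrAC ler_pdivrMr //.
have -> : 4 * l * L * (h * Y) = 4 * l * L * Y * h by ring.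
have -> : q ^+ 2 * (l + L) ^+ 2 = ((l + L) * q) ^+ 2 by ring.
exact: le_trans A1 A2.
Qed.
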